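(* Let $n\ge1$, $\alpha_1,\dots,\alpha_n\ge0$, and let $U:[0,\infty)\to\mathbb{R}$ be continuous, strictly increasing, concave and differentiable with $U(0)=0$. Let $\varepsilon>0$ be such that $\varepsilon/n$ lies in the range of $U$, and suppose $K:=1/U^{-1}(\varepsilon/n)$ is a positive integer. Let $\mathrm{OPT}$ be the maximum of $\sum_{i=1}^n U(\alpha_i+x_i)$ over real $x_i\ge0$ with $\sum_i x_i=1$, and let $\mathrm{OPT}_K$ be the maximum of the same objective over $x_i\in\{0,1/K,2/K,\dots\}$ with $\sum_i x_i\le1$. Then $\mathrm{OPT}-\mathrm{OPT}_K\le\varepsilon$; that is, an optimal solution of the $K$-discretized problem is an additive $\varepsilon$-approximation of the optimum of the continuous problem.
   Context: The continuous common goods problem: one agent with one unit of infinitely divisible resource and $n$ goods with existing resource levels $\alpha_i$, utility $\sum_i U(\alpha_i+x_i)$. The $K$-discretized version: the agent's unit of resource consists of $K$ atomic units of volume $1/K$. *)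

(* Defs.v *)
From mathcomp Require Import all_boot all_order all_algebra.
From mathcomp Require Import all_classical all_reals all_analysis.
Set Implicit Arguments. Unset Strict Implicit. Unset Printing Implicit Defensive.
Import Order.TTheory GRing.Theory Num.Theory.
Import numFieldNormedType.Exports.
Local Open Scope ring_scope.
Local Open Scope classical_set_scope.

Definition concave_on_nonneg (R : realType) (U : R -> R) : Prop :=
  forall x y t : R, 0 <= x -> 0 <= y -> 0 <= t -> t <= 1 ->
    t * U x + (1 - t) * U y <= U (t * x + (1 - t) * y).

Definition strictly_increasing_on_nonneg (R : realType) (U : R -> R) : Prop :=
  forall x y : R, 0 <= x -> x < y -> U x < U y.

Definition differentiable_on_nonneg (R : realType) (U : R -> R) : Prop :=
  (forall x : R, 0 < x -> derivable U x 1) /\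
  cvg ((fun h : R => h^-1 * (U h - U 0)) @ (0 : R)^'+).

Definition cg_obj (R : realType) (n : nat) (U : R -> R) (alpha x : 'I_n -> R) : R :=
  \sum_(i < n) U (alpha i + x i).

Definition cg_feasible (R : realType) (n : nat) (x : 'I_n -> R) : Prop :=
  (forall i, 0 <= x i) /\ \sum_(i < n) x i = 1.

(* K-discretized points: x_i = k_i / K with k_i natural and sum x_i <= 1,
   i.e. sum k_i <= K. *)
Definition disc_point (R : realType) (n K : nat) (k : 'I_n -> nat) : 'I_n -> R :=
  fun i => (k i)%:R / K%:R.

Definition disc_feasible (n K : nat) (k : 'I_n -> nat) : Prop :=
  (\sum_(i < n) k i <= K)%N.

Definition disc_optimal (R : realType) (n K : nat) (U : R -> R) (alpha : 'I_n -> R)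
    (k : 'I_n -> nat) : Prop :=
  disc_feasible K k /\
  forall k' : 'I_n -> nat, disc_feasible K k' ->
    cg_obj U alpha (disc_point R K k') <= cg_obj U alpha (disc_point R K k).

(* Main.v *)
Require Import Defs.
From mathcomp Require Import all_boot all_order all_algebra.
From mathcomp Require Import all_classical all_reals all_analysis.
Import Order.TTheory GRing.Theory Num.Theory.
Import numFieldNormedType.Exports.
Local Open Scope ring_scope.
Local Open Scope classical_set_scope.

Lemma subadd_concave (R : realType) (U : R -> R) (a d : R) :
  concave_on_nonneg U -> U 0 = 0 -> 0 <= a -> 0 <= d ->
  U (a + d) <= U a + U d.
Proof.
move=> hc U0 ha hd.
have [s0|spos] := eqVneq (a + d) 0.
  have a0 : a = 0 by apply/eqP; rewrite eq_le ha andbT -s0 lerDl.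
  have d0 : d = 0 by move: s0; rewrite a0 add0r.
  by rewrite a0 d0 addr0 U0 addr0.
have sp : 0 < a + d by rewrite lt_def spos addr_ge0.
set t := a / (a + d).
have t0 : 0 <= t by rewrite divr_ge0 // addr_ge0.
have t1 : t <= 1 by rewrite ler_pdivrMr // mul1r lerDl.
have h1 := hc (a + d) 0 t (ltW sp) (lexx _) t0 t1.
have h2 := hc 0 (a + d) t (lexx _) (ltW sp) t0 t1.
rewrite U0 !mulr0 addr0 add0r in h1 h2.
have e1 : t * (a + d) = a by rewrite /t divfK ?spos.
have e2 : (1 - t) * (a + d) = d by rewrite mulrBl mul1r e1 addrC addKr.
rewrite e1 in h1; rewrite e2 in h2.
have : U (a + d) = t * U (a + d) + (1 - t) * U (a + d) by rewrite -mulrDl addrCA subrr addr0 mul1r.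
move=> ->.
rewrite addr0 in h1; rewrite add0r in h2; exact: (lerD h1 h2).
Qed.

Theorem lemma3 (R : realType) (n : nat) (alpha : 'I_n -> R) (U : R -> R)
  (eps : R) (K : nat) :
  (0 < n)%N ->
  (forall i, 0 <= alpha i) ->
  {within `[0, +oo[%classic, continuous U} ->
  strictly_increasing_on_nonneg U ->
  concave_on_nonneg U ->
  differentiable_on_nonneg U ->
  U 0 = 0 ->
  0 < eps ->
  (* y = U^{-1}(eps/n) exists (unique, as U is strictly increasing) and 1/y = K, K a positive integer *)
  (exists y : R, 0 <= y /\ U y = eps / n%:R /\ y^-1 = K%:R) ->
  (0 < K)%N ->
  forall (x : 'I_n -> R) (k : 'I_n -> nat),
    cg_feasible x ->
    disc_optimal K U alpha k ->
    cg_obj U alpha x - cg_obj U alpha (disc_point R K k) <= eps.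
Proof.
move=> n0 ha _ hinc hc _ U0 _ [y [y0 [Uy yK]]] K0 x k [x0 xs] [_ kopt].
have Kp : 0 < K%:R :> R by rewrite ltr0n.
have yE : y = K%:R^-1 by rewrite -yK invrK.
set k0 := fun i => Num.truncn (K%:R * x i).
have kx i : (k0 i)%:R <= K%:R * x i < (k0 i).+1%:R.
  by apply: truncn_itv; rewrite mulr_ge0 // ler0n.
have f0 : disc_feasible K k0.
  rewrite /disc_feasible -(ler_nat R) natr_sum.
  apply: le_trans (_ : \sum_(i < n) K%:R * x i <= _).
    by apply: ler_sum => i _; case/andP: (kx i).
  by rewrite -mulr_sumr xs mulr1.
apply: le_trans (_ : cg_obj U alpha x - cg_obj U alpha (disc_point R K k0) <= _).
  by rewrite lerB // kopt.
rewrite /cg_obj -sumrB.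
have -> : eps = \sum_(i < n) (eps / n%:R).
  rewrite sumr_const card_ord -(mulr_natr (eps / n%:R)) divfK //.
  by rewrite pnatr_eq0 -lt0n.
apply: ler_sum => i _.
rewrite lerBlDr -Uy.
set d := x i - disc_point R K k0 i.
have dp : disc_point R K k0 i = x i - d by rewrite /d opprB addrC subrK.
case/andP: (kx i) => l1 l2.
have d0 : 0 <= d by rewrite /d subr_ge0 /disc_point ler_pdivrMr // mulrC.
have dy : d < y.
  rewrite /d yE ltrBlDr /disc_point.
  have -> : K%:R^-1 + (k0 i)%:R / K%:R = ((k0 i).+1)%:R / K%:R :> R.
    by rewrite -natr1 mulrDl mul1r addrC.
  by rewrite ltr_pdivlMr // mulrC.
have hx0 : 0 <= alpha i + disc_point R K k0 i.
  by rewrite addr_ge0 // /disc_point divr_ge0 // ler0n.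
apply: le_trans (_ : U (alpha i + disc_point R K k0 i) + U d <= _).
  have e : disc_point R K k0 i + d = x i by rewrite /d addrC subrK.
  rewrite -e addrA.
  exact: subadd_concave.
rewrite addrC lerD2r.
exact: ltW (hinc d y d0 dy).
Qed.
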